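(* Let $\lambda>0$, let $(\mathbf{l}_n)_{n\in\mathbb{N}^+}$ be a sequence with $\mathbf{l}_n\in[-1,1]$, and let $(a_n)_{n\in\mathbb{N}^+}$ be a sequence of positive integers with $a_{n+1}>a_n$. Suppose that $\sum_{n=1}^{\infty}e^{-\mathbf{l}_n a_n t}$ is majorized by $t^{-\lambda}$ as $t\to0^+$ (i.e. there is $C>0$ with $\sum_{n=1}^{\infty}e^{-\mathbf{l}_n a_n t}\le C t^{-\lambda}$ for all sufficiently small $t>0$). Then the Euler product $$\prod_{n=1}^{\infty}\frac{1}{1-\mathbf{l}_n a_n^{-s}}$$ admits an analytic continuation to the half-plane $\Re(s)>\max(1/2,\lambda)$ having no zeros and no singularities there.
   Context: For $a>0$, $a^{-s}=e^{-s\ln a}$. *)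

(* Defs.v *)
From Stdlib Require Import Reals List.
From Coquelicot Require Import Coquelicot.
Open Scope R_scope.

Definition cexp (z : C) : C :=
  (exp (Re z) * cos (Im z), exp (Re z) * sin (Im z)).

Definition cpow_neg (a : R) (s : C) : C := cexp (- s * RtoC (ln a)).

Fixpoint cprod (f : nat -> C) (N : nat) : C :=
  match N with
  | O => 1%C
  | S N' => (cprod f N' * f N')%C
  end.

Definition euler_factor (l : R) (a : nat) (s : C) : C :=
  (/ (1 - RtoC l * cpow_neg (INR a) s))%C.

Definition holomorphic_on (U : C -> Prop) (F : C -> C) : Prop :=
  forall z, U z -> ex_derive (K := C_AbsRing) (V := C_NormedModule) F z.

(* Main.v *)
Require Import Defs.
From Stdlib Require Import Reals.
From Coquelicot Require Import Coquelicot.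
From Stdlib Require Import Lra Lia ClassicalEpsilon FunctionalExtensionality.
Open Scope R_scope.

Fixpoint psum (b : nat -> R) (N : nat) : R :=
  match N with O => 0 | S N' => psum b N' + b N' end.

Definition summ (b : nat -> R) : Prop :=
  (forall n, 0 <= b n) /\ exists M, forall N, psum b N <= M.

Lemma psum_nonneg b : (forall n, 0 <= b n) -> forall N, 0 <= psum b N.
Proof. intros H N; induction N; simpl; [lra| specialize (H N); lra]. Qed.

Lemma psum_mono b : (forall n, 0 <= b n) -> forall m n, (m <= n)%nat -> psum b m <= psum b n.
Proof. intros H m n Hmn; induction Hmn; [lra| simpl; specialize (H m0); lra]. Qed.



Lemma sum_n_psum (b : nat -> R) N : sum_n b N = psum b (S N).
Proof.
  induction N. { rewrite sum_O. simpl. lra. }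
  rewrite sum_Sn, IHN. simpl. unfold plus; simpl. lra.
Qed.

Lemma summ_ex_series b : summ b -> ex_series b.
Proof.
  intros [Hp [S0 HS]].
  assert (H : ex_finite_lim_seq (sum_n b)).
  { apply ex_finite_lim_seq_incr with S0.
    - intros n. rewrite !sum_n_psum. simpl. specialize (Hp (S n)). lra.
    - intros n. rewrite sum_n_psum. apply HS. }
  destruct H as [l Hl]. exists l. exact Hl.
Qed.

Lemma summ_scal K b : 0 <= K -> summ b -> summ (fun n => K * b n).
Proof.
  intros HK [Hp [S0 HS]]; split.
  - intros n; specialize (Hp n); nra.
  - exists (K * S0). intros N. assert (psum (fun n => K * b n) N = K * psum b N).
    { induction N; simpl; [ring| rewrite IHN; ring]. }
    rewrite H. specialize (HS N). nra.
Qed.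

Lemma summ_plus b c : summ b -> summ c -> summ (fun n => b n + c n).
Proof.
  intros [Hp [S0 HS]] [Hq [T HT]]; split.
  - intros n; specialize (Hp n); specialize (Hq n); lra.
  - exists (S0 + T). intros N. assert (psum (fun n => b n + c n) N = psum b N + psum c N).
    { induction N; simpl; [ring| rewrite IHN; ring]. }
    rewrite H. specialize (HS N); specialize (HT N); lra.
Qed.

Lemma summ_dom b u N0 : summ u -> (forall n, 0 <= b n) -> (forall n, (N0 <= n)%nat -> b n <= u n) -> summ b.
Proof.
  intros [Hu [S0 HS]] Hb Hd; split; auto.
  exists (psum b N0 + S0). intros N.
  assert (forall N, psum b N <= psum b N0 + psum u N).
  { induction N1. simpl. pose proof (psum_nonneg b Hb N0). lra.
    simpl. destruct (Compare_dec.le_lt_dec N0 N1).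
    - specialize (Hd N1 l). specialize (Hu N1). lra.
    - pose proof (psum_mono b Hb (S N1) N0 ltac:(lia)). simpl in H.
      pose proof (psum_nonneg u Hu N1). specialize (Hu N1). lra. }
  specialize (H N); specialize (HS N); lra.
Qed.

Definition tends (x : nat -> C) (v : C) : Prop :=
  forall eps, 0 < eps -> exists N0, forall N, (N0 <= N)%nat -> Cmod (x N - v)%C < eps.

Lemma sqrt2_lt_2 : sqrt 2 < 2.
Proof.
  rewrite <- (sqrt_square 2) at 2 by lra. apply sqrt_lt_1; lra.
Qed.

Lemma cauchy_tends (x : nat -> C) b : summ b ->
  (forall N, Cmod (x (S N) - x N)%C <= b N) -> exists v, tends x v.
Proof.
  intros Hb Hx.
  set (e := fun N => (x (S N) - x N)%C).
  assert (He : ex_series e).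
  { apply (ex_series_le (K := C_AbsRing) (V := C_CompleteNormedModule)) with b. intros n. change (Cmod (e n) <= b n). apply Hx.
    apply summ_ex_series; auto. }
  destruct He as [l Hl].
  assert (Hsum : forall N, x (S N) = (x O + sum_n e N)%C).
  { induction N. rewrite sum_O. unfold e. ring.
    rewrite sum_Sn. change (x (S (S N)) = (x 0%nat + (sum_n e N + e (S N)))%C). rewrite Cplus_assoc, <- IHN. unfold e. ring. }
  exists (x O + l)%C. intros eps Heps.
  assert (Hp : 0 < eps / 2) by lra.
  destruct (proj1 (filterlim_locally (F := eventually) (sum_n e) l) Hl (mkposreal _ Hp)) as [N0 HN0].
  exists (S N0). intros N HN. destruct N as [|N]; [lia|].
  rewrite Hsum. specialize (HN0 N ltac:(lia)).
  apply C_NormedModule_mixin_compat2 in HN0. simpl in HN0.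
  pose proof sqrt2_lt_2.
  replace (x 0%nat + sum_n e N - (x 0%nat + l))%C with (minus (sum_n e N) l).
  2:{ unfold minus, plus, opp; simpl. ring. }
  assert (sqrt 2 * (eps/2) < eps) by nra. apply Rlt_trans with (sqrt 2 * (eps/2)); [exact HN0| lra].
Qed.

Lemma tends_le x v M : tends x v -> (forall N, Cmod (x N) <= M) -> Cmod v <= M.
Proof.
  intros Ht HM. destruct (Rle_lt_dec (Cmod v) M) as [h|h]; auto.
  destruct (Ht (Cmod v - M) ltac:(lra)) as [N0 HN].
  specialize (HN N0 (le_n _)). specialize (HM N0).
  pose proof (Cmod_triangle (x N0) (v - x N0)%C).
  replace (x N0 + (v - x N0))%C with v in H by ring.
  rewrite <- Cmod_opp in HN. replace (- (x N0 - v))%C with (v - x N0)%C in HN by ring. lra.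
Qed.

Lemma tends_ge x v M : tends x v -> (forall N, M <= Cmod (x N)) -> M <= Cmod v.
Proof.
  intros Ht HM. destruct (Rle_lt_dec M (Cmod v)) as [h|h]; auto.
  destruct (Ht (M - Cmod v) ltac:(lra)) as [N0 HN].
  specialize (HN N0 (le_n _)). specialize (HM N0).
  pose proof (Cmod_triangle (x N0 - v) v)%C.
  replace (x N0 - v + v)%C with (x N0) in H by ring. lra.
Qed.

Lemma tends_comb x y z a b c k : tends x a -> tends y b -> tends z c ->
  tends (fun N => x N - y N - k * z N)%C (a - b - k * c)%C.
Proof.
  intros Hx Hy Hz eps Heps.
  set (e := eps / (3 * (1 + Cmod k))).
  assert (Hk := Cmod_ge_0 k).
  assert (He : 0 < e). { unfold e. apply Rdiv_lt_0_compat; lra. }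
  destruct (Hx e He) as [N1 H1]. destruct (Hy e He) as [N2 H2]. destruct (Hz e He) as [N3 H3].
  exists (N1 + N2 + N3)%nat. intros N HN.
  specialize (H1 N ltac:(lia)); specialize (H2 N ltac:(lia)); specialize (H3 N ltac:(lia)).
  replace (x N - y N - k * z N - (a - b - k * c))%C with
    ((x N - a) + (- (y N - b)) + (- k) * (z N - c))%C by ring.
  pose proof (Cmod_triangle (x N - a + - (y N - b)) (- k * (z N - c)))%C.
  pose proof (Cmod_triangle (x N - a) (- (y N - b)))%C.
  rewrite Cmod_mult, Cmod_opp in H. rewrite Cmod_opp in H0.
  assert (Cmod k * Cmod (z N - c)%C <= Cmod k * e) by (apply Rmult_le_compat_l; lra).
  assert (e * (3 * (1 + Cmod k)) = eps) by (unfold e; field; lra).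
  nra.
Qed.

Lemma tends_filterlim x v : tends x v -> filterlim x eventually (locally v).
Proof.
  intros Ht P [eps HP]. destruct (Ht eps (cond_pos eps)) as [N0 HN].
  exists N0. intros n Hn. apply HP. apply C_NormedModule_mixin_compat1.
  apply HN; auto.
Qed.

Lemma cmod_le_1b (z : C) b : Cmod (z - 1)%C <= b -> Cmod z <= 1 + b.
Proof.
  intros H. pose proof (Cmod_triangle (z - 1)%C 1%C).
  replace (z - 1 + 1)%C with z in H0 by ring. rewrite Cmod_1 in H0. lra.
Qed.

Lemma cprod_bound g b : (forall n, Cmod (g n - 1)%C <= b n) ->
  forall N, Cmod (cprod g N) <= exp (psum b N).
Proof.
  intros H N. induction N; simpl.
  - rewrite Cmod_1, exp_0. lra.
  - rewrite Cmod_mult, exp_plus. apply Rmult_le_compat; try apply Cmod_ge_0; auto.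
    eapply Rle_trans. apply cmod_le_1b, H. apply exp_ineq1_le.
Qed.

Lemma cprod_lower g c : (forall n, 0 <= c n) -> (forall n, 1 <= Cmod (g n) * (1 + c n)) ->
  forall N, exp (- psum c N) <= Cmod (cprod g N).
Proof.
  intros Hc H N. induction N; simpl.
  - rewrite Cmod_1, Ropp_0, exp_0. lra.
  - rewrite Cmod_mult, Ropp_plus_distr, exp_plus. apply Rmult_le_compat; try (left; apply exp_pos); auto.
    specialize (H N). specialize (Hc N).
    pose proof (exp_ineq1_le (c N)). pose proof (exp_pos (c N)).
    rewrite exp_Ropp. apply Rmult_le_reg_r with (exp (c N)); auto.
    rewrite Rinv_l by lra. pose proof (Cmod_ge_0 (g N)). nra.
Qed.

Lemma prod_tends g b : summ b -> (forall n, Cmod (g n - 1)%C <= b n) ->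
  exists v, tends (cprod g) v.
Proof.
  intros Hb H. destruct Hb as [Hp [M HM]].
  apply cauchy_tends with (fun n => exp M * b n).
  - apply summ_scal. left; apply exp_pos. split; eauto.
  - intros N. simpl. replace (cprod g N * g N - cprod g N)%C with (cprod g N * (g N - 1))%C by ring.
    rewrite Cmod_mult. apply Rmult_le_compat; try apply Cmod_ge_0; auto.
    eapply Rle_trans. apply cprod_bound; eauto.
    destruct (Req_dec (psum b N) M) as [e|e]. rewrite e; lra.
    left. apply exp_increasing. specialize (HM N). lra.
Qed.

Lemma cshift (a y : C) : y = (a + (y + - a))%C.
Proof. ring. Qed.

Lemma derive_of_bound (F : C -> C) s0 D K r : 0 < r -> 0 <= K ->
  (forall h, Cmod h <= r -> Cmod (F (s0 + h) - F s0 - h * D)%C <= K * Cmod h ^ 2) ->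
  is_derive (K := C_AbsRing) (V := C_NormedModule) F s0 D.
Proof.
  intros Hr HK H. split.
  - apply is_linear_scal_l.
  - intros x Hx. apply (is_filter_lim_locally_unique (K:=C_AbsRing) (V:=AbsRing_NormedModule C_AbsRing)) in Hx. subst x.
    intros eps.
    assert (Hd : 0 < Rmin (r / 2) (eps / (2 * (K + 1)))).
    { apply Rmin_pos. lra. apply Rdiv_lt_0_compat. apply cond_pos. lra. }
    exists (mkposreal _ Hd). intros y Hy.
    change (Cmod (minus y s0) < Rmin (r / 2) (eps / (2 * (K + 1)))) in Hy.
    pose proof sqrt2_lt_2. pose proof (Rmin_l (r/2) (eps / (2 * (K + 1)))).
    pose proof (Rmin_r (r/2) (eps / (2 * (K + 1)))).
    set (h := minus y s0) in *.
    assert (Hy' : y = (s0 + h)%C). { exact (cshift s0 y). }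
    change (Cmod (F y - F s0 - h * D)%C <= eps * Cmod h).
    rewrite Hy'. 
    assert (Hh0 := Cmod_ge_0 h).
    assert (Hsq : 0 <= sqrt 2) by apply sqrt_pos.
    set (m := Rmin (r / 2) (eps / (2 * (K + 1)))) in *.
    assert (Hm : 0 < m) by exact Hd.
    assert (Hhr : Cmod h <= r) by nra.
    eapply Rle_trans. apply H; auto.
    assert (Cmod h <= 2 * m) by nra.
    assert (K * (2 * m) <= eps).
    { assert (2 * m * (K + 1) <= eps).
      { apply Rle_trans with (2 * (eps / (2 * (K + 1))) * (K + 1)).
        apply Rmult_le_compat_r; lra. right. field. lra. }
      nra. }
    assert (K * Cmod h <= eps) by nra.
    replace (K * Cmod h ^ 2) with ((K * Cmod h) * Cmod h) by ring.
    apply Rmult_le_compat_r; auto.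
Qed.

Fixpoint Dseq (f : nat -> C -> C) (s0 : C) (d : nat -> C) (N : nat) : C :=
  match N with
  | O => 0%C
  | S N' => (Dseq f s0 d N' * f N' s0 + cprod (fun n => f n s0) N' * d N')%C
  end.

Section Deriv.
Variables (f : nat -> C -> C) (s0 : C) (r : R) (d : nat -> C) (b be ga : nat -> R).
Hypothesis Hb0 : forall n, 0 <= b n.
Hypothesis Hbe0 : forall n, 0 <= be n.
Hypothesis Hga0 : forall n, 0 <= ga n.
Hypothesis H1 : forall n h, Cmod h <= r -> Cmod (f n (s0 + h) - 1)%C <= b n.
Hypothesis H2 : forall n h, Cmod h <= r -> Cmod (f n (s0 + h) - f n s0)%C <= be n * Cmod h.
Hypothesis H3 : forall n h, Cmod h <= r -> Cmod (f n (s0 + h) - f n s0 - h * d n)%C <= ga n * Cmod h ^ 2.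
Hypothesis H4 : forall n, Cmod (d n) <= be n.
Hypothesis Hr : 0 < r.

Lemma H1' n : Cmod (f n s0 - 1)%C <= b n.
Proof. pose proof (H1 n 0%C). rewrite Cplus_0_r in H. apply H. rewrite Cmod_0; lra. Qed.

Lemma invariants h : Cmod h <= r -> forall N,
  let p := cprod (fun n => f n (s0 + h)) N in
  let p0 := cprod (fun n => f n s0) N in
  let E := exp (psum b N) in
  Cmod (p - p0)%C <= E * psum be N * Cmod h /\
  Cmod (Dseq f s0 d N) <= E * psum be N /\
  Cmod (p - p0 - h * Dseq f s0 d N)%C <= E * (psum ga N + psum be N ^ 2) * Cmod h ^ 2.
Proof.
  intros Hh N. induction N as [|N IH]; simpl.
  - assert (Z : forall z : C, z = 0%C -> Cmod z = 0) by (intros z Hz; rewrite Hz; apply Cmod_0).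
    rewrite (Z (1-1)%C) by ring. rewrite (Z 0%C) by ring. rewrite (Z (1 - 1 - h * 0)%C) by ring. rewrite exp_0. pose proof (Cmod_ge_0 h). repeat split; nra.

  - destruct IH as [I2 [I2' I3]].
    set (p := cprod (fun n => f n (s0 + h)) N) in *.
    set (p0 := cprod (fun n => f n s0) N) in *.
    set (Dn := Dseq f s0 d N) in *.
    set (q' := f N (s0 + h)). set (q := f N s0).
    set (E := exp (psum b N)) in *.
    assert (HE : 0 < E) by apply exp_pos.
    assert (Hp : Cmod p <= E) by (apply cprod_bound; intros; apply H1; auto).
    assert (Hp0 : Cmod p0 <= E) by (apply cprod_bound; intros; apply H1').
    assert (Hq' : Cmod q' <= 1 + b N) by (apply cmod_le_1b, H1; auto).
    assert (Hq : Cmod q <= 1 + b N) by (apply cmod_le_1b, H1').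
    assert (Hqq : Cmod (q' - q)%C <= be N * Cmod h) by (apply H2; auto).
    assert (Hqqd : Cmod (q' - q - h * d N)%C <= ga N * Cmod h ^ 2) by (apply H3; auto).
    assert (Hd := H4 N).
    assert (Heb : 1 + b N <= exp (b N)) by apply exp_ineq1_le.
    rewrite exp_plus. fold E.
    assert (Hx := Cmod_ge_0 h).
    assert (HS := psum_nonneg be Hbe0 N). assert (HG := psum_nonneg ga Hga0 N).
    specialize (Hb0 N). specialize (Hbe0 N). specialize (Hga0 N).
    pose proof (Cmod_ge_0 p) as c1. pose proof (Cmod_ge_0 p0) as c2.
    pose proof (Cmod_ge_0 q) as c3. pose proof (Cmod_ge_0 q') as c4.
    pose proof (Cmod_ge_0 Dn) as c5. pose proof (Cmod_ge_0 (d N)) as c6.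
    pose proof (Cmod_ge_0 (p - p0)%C) as c7. pose proof (Cmod_ge_0 (q' - q)%C) as c8.
    set (S := psum be N) in *. set (G := psum ga N) in *. set (x := Cmod h) in *.
    set (eb := exp (b N)) in *.
    split; [|split].
    + replace (p * q' - p0 * q)%C with ((p - p0) * q' + p0 * (q' - q))%C by ring.
      eapply Rle_trans. apply Cmod_triangle. rewrite !Cmod_mult.
      assert (Cmod (p - p0) * Cmod q' <= (E * S * x) * (1 + b N)) by (apply Rmult_le_compat; auto).
      assert (Cmod p0 * Cmod (q' - q) <= E * (be N * x)) by (apply Rmult_le_compat; auto).
      assert (E * S * x * (1 + b N) <= E * S * x * eb).
      { apply Rmult_le_compat_l; auto. apply Rmult_le_pos; try apply Rmult_le_pos; lra. }
      assert (E * (be N * x) <= E * eb * (be N * x)).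
      { assert (1 <= eb) by lra. assert (0 <= E * (be N * x)) by (apply Rmult_le_pos; [lra|]; apply Rmult_le_pos; lra). nra. }
      nra.
    + eapply Rle_trans. apply Cmod_triangle. rewrite !Cmod_mult.
      assert (Cmod Dn * Cmod q <= (E * S) * (1 + b N)) by (apply Rmult_le_compat; auto).
      assert (Cmod p0 * Cmod (d N) <= E * be N) by (apply Rmult_le_compat; auto).
      assert (E * S * (1 + b N) <= E * S * eb) by (apply Rmult_le_compat_l; nra).
      assert (E * be N <= E * eb * be N). { assert (1 <= eb) by lra. assert (0 <= E * be N) by (apply Rmult_le_pos; lra). nra. }
      nra.
    + replace (p * q' - p0 * q - h * (Dn * q + p0 * d N))%C with
        ((p - p0 - h * Dn) * q' + h * Dn * (q' - q) + p0 * (q' - q - h * d N))%C by ring.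
      eapply Rle_trans. apply Cmod_triangle. eapply Rle_trans. apply Rplus_le_compat_r, Cmod_triangle.
      rewrite !Cmod_mult. fold x.
      assert (A1 : Cmod (p - p0 - h * Dn)%C * Cmod q' <= (E * (G + S ^ 2) * x ^ 2) * (1 + b N))
        by (apply Rmult_le_compat; auto; apply Cmod_ge_0).
      assert (A2 : x * Cmod Dn * Cmod (q' - q) <= (x * (E * S)) * (be N * x)).
      { apply Rmult_le_compat; auto. apply Rmult_le_pos; auto. apply Rmult_le_compat_l; auto. }
      assert (A3 : Cmod p0 * Cmod (q' - q - h * d N)%C <= E * (ga N * x ^ 2))
        by (apply Rmult_le_compat; auto; apply Cmod_ge_0).
      assert (A4 : E * (G + S ^ 2) * x ^ 2 * (1 + b N) <= E * (G + S ^ 2) * x ^ 2 * eb).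
      { apply Rmult_le_compat_l; auto. apply Rmult_le_pos; [apply Rmult_le_pos|]; nra. }
      assert (A5 : 0 <= E * x ^ 2) by nra.
      assert (A6 : E * x^2 * (S * be N + ga N) <= E * x^2 * eb * (S * be N + ga N)).
      { assert (0 <= E * x ^ 2 * (S * be N + ga N)) by (apply Rmult_le_pos; nra). nra. }
      assert (A7 : E * eb * ((G + S ^ 2) + (S * be N + ga N)) <= E * eb * (G + ga N + (S + be N) ^ 2)).
      { apply Rmult_le_compat_l. nra. nra. }
      assert (A8 : 0 <= x ^ 2) by nra.
      assert (A9 : E * eb * ((G + S ^ 2) + (S * be N + ga N)) * x ^ 2 <= E * eb * (G + ga N + (S + be N) ^ 2) * x ^ 2)
        by (apply Rmult_le_compat_r; auto).
      nra.
Qed.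

Lemma exp_mono x y : x <= y -> exp x <= exp y.
Proof. intros H. destruct (Req_dec x y) as [->|e]; [lra|]. left; apply exp_increasing; lra. Qed.

Lemma prod_deriv (F : C -> C) : summ b -> summ be -> summ ga ->
  (forall h, Cmod h <= r -> tends (fun N => cprod (fun n => f n (s0 + h)%C) N) (F (s0 + h)%C)) ->
  ex_derive (K := C_AbsRing) (V := C_NormedModule) F s0.
Proof.
  intros [_ [Mb HMb]] [_ [Mbe HMbe]] [_ [Mga HMga]] HT.
  set (E := exp Mb).
  assert (HE : forall N, exp (psum b N) <= E) by (intros; apply exp_mono; auto).
  assert (HE0 : 0 < E) by apply exp_pos.
  assert (HMbe0 : 0 <= Mbe) by (pose proof (HMbe O); simpl in *; lra).
  assert (HMga0 : 0 <= Mga) by (pose proof (HMga O); simpl in *; lra).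
  assert (Hinv0 := invariants 0%C ltac:(rewrite Cmod_0; lra)).
  destruct (cauchy_tends (Dseq f s0 d) (fun N => E * Mbe * b N + E * be N)) as [Dl HDl].
  { apply summ_plus; apply summ_scal; try (split; eauto). nra. lra. }
  { intros N. simpl.
    replace (Dseq f s0 d N * f N s0 + cprod (fun n => f n s0) N * d N - Dseq f s0 d N)%C
      with (Dseq f s0 d N * (f N s0 - 1) + cprod (fun n => f n s0) N * d N)%C by ring.
    eapply Rle_trans. apply Cmod_triangle. rewrite !Cmod_mult.
    destruct (Hinv0 N) as [_ [HD _]].
    assert (HD' : Cmod (Dseq f s0 d N) <= E * Mbe).
    { eapply Rle_trans. apply HD. apply Rmult_le_compat; auto. left; apply exp_pos.
      apply psum_nonneg; auto. }
    assert (Hp0 : Cmod (cprod (fun n => f n s0) N) <= E).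
    { eapply Rle_trans. apply cprod_bound. intros; apply H1'. auto. }
    apply Rplus_le_compat; apply Rmult_le_compat; try apply Cmod_ge_0; auto. apply H1'. }
  exists Dl. apply (derive_of_bound F s0 Dl (E * (Mga + Mbe ^ 2)) r); auto.
  { apply Rmult_le_pos; nra. }
  intros h Hh.
  assert (T0 := HT 0%C ltac:(rewrite Cmod_0; lra)). rewrite Cplus_0_r in T0.
  assert (Th := HT h Hh).
  pose proof (tends_comb _ _ _ _ _ _ h Th T0 HDl) as Tc.
  apply (tends_le _ _ _ Tc). intros N.
  destruct (invariants h Hh N) as [_ [_ I3]]. simpl in I3.
  eapply Rle_trans. apply I3.
  assert (0 <= psum ga N) by (apply psum_nonneg; auto).
  assert (0 <= psum be N) by (apply psum_nonneg; auto).
  assert (psum be N ^ 2 <= Mbe ^ 2) by (apply pow_incr; auto).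
  assert (0 <= Cmod h ^ 2) by (apply pow_le; apply Cmod_ge_0).
  apply Rmult_le_compat_r; auto. apply Rmult_le_compat; auto. left; apply exp_pos. nra.
  specialize (HMga N). lra.
Qed.
End Deriv.

Lemma cexp_add z1 z2 : cexp (z1 + z2)%C = (cexp z1 * cexp z2)%C.
Proof.
  destruct z1 as [x1 y1], z2 as [x2 y2]. unfold cexp; simpl.
  rewrite exp_plus, cos_plus, sin_plus.
  apply injective_projections; simpl; ring.
Qed.

Lemma Cmod_cexp z : Cmod (cexp z) = exp (Re z).
Proof.
  destruct z as [x y]. unfold cexp, Cmod; simpl.
  pose proof (sin2_cos2 y) as Hs. unfold Rsqr in Hs.
  replace (exp x * cos y * (exp x * cos y * 1) + exp x * sin y * (exp x * sin y * 1)) with (exp x * exp x) by nra.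
  apply sqrt_square. left; apply exp_pos.
Qed.

Lemma cexp_0 : cexp 0%C = 1%C.
Proof. unfold cexp; simpl. rewrite exp_0, cos_0, sin_0. apply injective_projections; simpl; ring. Qed.

Lemma Cmod_le_sum (z : C) : Cmod z <= Rabs (Re z) + Rabs (Im z).
Proof.
  destruct z as [u v]. unfold Cmod; simpl.
  rewrite <- (sqrt_pow2 (Rabs u + Rabs v)) by (pose proof (Rabs_pos u); pose proof (Rabs_pos v); lra).
  apply sqrt_le_1_alt.
  pose proof (Rabs_pos u); pose proof (Rabs_pos v).
  rewrite <- (pow2_abs u), <- (pow2_abs v) at 1. nra.
Qed.

Lemma im_le_Cmod (z : C) : Rabs (Im z) <= Cmod z.
Proof. pose proof (Rmax_Cmod z). pose proof (Rmax_r (Rabs (fst z)) (Rabs (snd z))). unfold Im. lra. Qed.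

Lemma cont_of_der f df : (forall t, is_derive f t (df t)) -> forall t, continuity_pt f t.
Proof.
  intros H t. apply continuity_pt_filterlim. apply (ex_derive_continuous f t).
  exists (df t). apply H.
Qed.

Lemma taylor1 phi phi1 M : (forall t, is_derive phi t (phi1 t)) ->
  (forall t, 0 <= t <= 1 -> Rabs (phi1 t) <= M) -> Rabs (phi 1 - phi 0) <= M.
Proof.
  intros Hd HM.
  destruct (MVT_gen phi 0 1 phi1) as [c [Hc Heq]].
  - intros; apply Hd.
  - intros; apply (cont_of_der phi phi1 Hd).
  - rewrite Rmin_left, Rmax_right in Hc by lra.
    rewrite Heq. replace (1 - 0) with 1 by ring. rewrite Rmult_1_r. apply HM; auto.
Qed.

Lemma taylor2 phi phi1 phi2 M : (forall t, is_derive phi t (phi1 t)) ->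
  (forall t, is_derive phi1 t (phi2 t)) ->
  (forall t, 0 <= t <= 1 -> Rabs (phi2 t) <= M) -> Rabs (phi 1 - phi 0 - phi1 0) <= M.
Proof.
  intros Hd Hd1 HM.
  assert (HM0 : 0 <= M) by (specialize (HM 0 ltac:(lra)); pose proof (Rabs_pos (phi2 0)); lra).
  destruct (MVT_gen (fun t => phi t - t * phi1 0) 0 1 (fun t => phi1 t - phi1 0)) as [c [Hc Heq]].
  - intros x _. apply (is_derive_minus phi (fun t => t * phi1 0)). apply Hd.
    auto_derive. auto. ring.
  - intros x _. apply continuity_pt_minus. apply (cont_of_der phi phi1 Hd).
    apply continuity_pt_mult. apply continuity_pt_id. apply continuity_pt_const. intros a b; auto.
  - rewrite Rmin_left, Rmax_right in Hc by lra.
    replace (phi 1 - phi 0 - phi1 0) with (phi 1 - 1 * phi1 0 - (phi 0 - 0 * phi1 0)) by ring.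
    rewrite Heq. replace (1 - 0) with 1 by ring. rewrite Rmult_1_r.
    destruct (MVT_gen phi1 0 c phi2) as [e [He Heq2]].
    + intros; apply Hd1.
    + intros; apply (cont_of_der phi1 phi2 Hd1).
    + rewrite Rmin_left, Rmax_right in He by lra.
      rewrite Heq2. rewrite Rabs_mult. replace (c - 0) with c by ring.
      rewrite (Rabs_right c) by lra.
      assert (Rabs (phi2 e) <= M) by (apply HM; lra).
      pose proof (Rabs_pos (phi2 e)). nra.
Qed.

Lemma abs_prod3 a e c m em : Rabs a <= m -> 0 < e <= em -> Rabs c <= 1 -> Rabs (a * e * c) <= m * em.
Proof.
  intros Ha He Hc. rewrite !Rabs_mult. rewrite (Rabs_right e) by lra.
  pose proof (Rabs_pos a); pose proof (Rabs_pos c).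
  replace (m * em) with (m * em * 1) by ring.
  apply Rmult_le_compat; try nra.
Qed.

Lemma exp_mono' x y : x <= y -> exp x <= exp y.
Proof. intros H. destruct (Req_dec x y) as [->|e]; [lra|]. left; apply exp_increasing; lra. Qed.

Lemma cexp_bounds z : Cmod (cexp z - 1)%C <= 4 * Cmod z * exp (Cmod z) /\
  Cmod (cexp z - 1 - z)%C <= 8 * Cmod z ^ 2 * exp (Cmod z).
Proof.
  assert (Hx : Rabs (Re z) <= Cmod z) by apply re_le_Cmod.
  assert (Hy : Rabs (Im z) <= Cmod z) by apply im_le_Cmod.
  assert (Hm : 0 <= Cmod z) by apply Cmod_ge_0.
  set (m := Cmod z) in *.
  assert (HR1 : Re (cexp z - 1)%C = exp (1 * Re z) * cos (1 * Im z) - exp (0 * Re z) * cos (0 * Im z)).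
  { unfold cexp; simpl. unfold Re, Im. rewrite !Rmult_0_l, !Rmult_1_l, exp_0, cos_0. ring. }
  assert (HI1 : Im (cexp z - 1)%C = exp (1 * Re z) * sin (1 * Im z) - exp (0 * Re z) * sin (0 * Im z)).
  { unfold cexp; simpl. unfold Re, Im. rewrite !Rmult_0_l, !Rmult_1_l, exp_0, sin_0. ring. }
  assert (HR2 : Re (cexp z - 1 - z)%C = exp (1 * Re z) * cos (1 * Im z) - exp (0 * Re z) * cos (0 * Im z)
     - (Re z * exp (0 * Re z) * cos (0 * Im z) - Im z * exp (0 * Re z) * sin (0 * Im z))).
  { unfold cexp; simpl. unfold Re, Im. rewrite !Rmult_0_l, !Rmult_1_l, exp_0, cos_0, sin_0. ring. }
  assert (HI2 : Im (cexp z - 1 - z)%C = exp (1 * Re z) * sin (1 * Im z) - exp (0 * Re z) * sin (0 * Im z)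
     - (Re z * exp (0 * Re z) * sin (0 * Im z) + Im z * exp (0 * Re z) * cos (0 * Im z))).
  { unfold cexp; simpl. unfold Re, Im. rewrite !Rmult_0_l, !Rmult_1_l, exp_0, cos_0, sin_0. ring. }
  set (x := Re z) in *. set (y := Im z) in *.
  set (em := exp m).
  assert (He : forall t, 0 <= t <= 1 -> 0 < exp (t * x) <= em).
  { intros t Ht. split. apply exp_pos. unfold em. apply exp_mono'.
    pose proof (Rle_abs x). pose proof (Rabs_pos x). nra. }
  assert (Hc : forall t, Rabs (cos (t * y)) <= 1) by (intros; apply Rabs_le; apply COS_bound).
  assert (Hs : forall t, Rabs (sin (t * y)) <= 1) by (intros; apply Rabs_le; apply SIN_bound).
  assert (Hx2 : Rabs (x ^ 2 - y ^ 2) <= 2 * m ^ 2).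
  { rewrite <- (pow2_abs x), <- (pow2_abs y). pose proof (Rabs_pos x); pose proof (Rabs_pos y).
    apply Rabs_le. split; nra. }
  assert (Hxy : Rabs (2 * x * y) <= 2 * m ^ 2).
  { rewrite !Rabs_mult, Rabs_right by lra. pose proof (Rabs_pos x); pose proof (Rabs_pos y). nra. }
  assert (B1 : Rabs (Re (cexp z - 1)%C) <= 2 * m * em).
  { rewrite HR1. apply (taylor1 (fun t => exp (t * x) * cos (t * y))
      (fun t => x * exp (t * x) * cos (t * y) - y * exp (t * x) * sin (t * y))).
    - intros t. auto_derive; auto. ring.
    - intros t Ht. eapply Rle_trans. apply Rabs_triang. rewrite Rabs_Ropp.
      pose proof (abs_prod3 x _ _ m em Hx (He t Ht) (Hc t)).
      pose proof (abs_prod3 y _ _ m em Hy (He t Ht) (Hs t)). lra. }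
  assert (B2 : Rabs (Im (cexp z - 1)%C) <= 2 * m * em).
  { rewrite HI1. apply (taylor1 (fun t => exp (t * x) * sin (t * y))
      (fun t => x * exp (t * x) * sin (t * y) + y * exp (t * x) * cos (t * y))).
    - intros t. auto_derive; auto. ring.
    - intros t Ht. eapply Rle_trans. apply Rabs_triang.
      pose proof (abs_prod3 x _ _ m em Hx (He t Ht) (Hs t)).
      pose proof (abs_prod3 y _ _ m em Hy (He t Ht) (Hc t)). lra. }
  assert (B3 : Rabs (Re (cexp z - 1 - z)%C) <= 4 * m ^ 2 * em).
  { rewrite HR2. apply (taylor2 (fun t => exp (t * x) * cos (t * y))
      (fun t => x * exp (t * x) * cos (t * y) - y * exp (t * x) * sin (t * y))
      (fun t => (x ^ 2 - y ^ 2) * exp (t * x) * cos (t * y) - (2 * x * y) * exp (t * x) * sin (t * y))).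
    - intros t. auto_derive; auto. ring.
    - intros t. auto_derive; auto. ring.
    - intros t Ht. eapply Rle_trans. apply Rabs_triang. rewrite Rabs_Ropp.
      pose proof (abs_prod3 _ _ _ _ em Hx2 (He t Ht) (Hc t)).
      pose proof (abs_prod3 _ _ _ _ em Hxy (He t Ht) (Hs t)). lra. }
  assert (B4 : Rabs (Im (cexp z - 1 - z)%C) <= 4 * m ^ 2 * em).
  { rewrite HI2. apply (taylor2 (fun t => exp (t * x) * sin (t * y))
      (fun t => x * exp (t * x) * sin (t * y) + y * exp (t * x) * cos (t * y))
      (fun t => (x ^ 2 - y ^ 2) * exp (t * x) * sin (t * y) + (2 * x * y) * exp (t * x) * cos (t * y))).
    - intros t. auto_derive; auto. ring.
    - intros t. auto_derive; auto. ring.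
    - intros t Ht. eapply Rle_trans. apply Rabs_triang.
      pose proof (abs_prod3 _ _ _ _ em Hx2 (He t Ht) (Hs t)).
      pose proof (abs_prod3 _ _ _ _ em Hxy (He t Ht) (Hc t)). lra. }
  split; eapply Rle_trans; try apply Cmod_le_sum; lra.
Qed.

Lemma div_le x y X Y : 0 <= x <= X -> 0 < Y <= y -> x / y <= X / Y.
Proof.
  intros Hx Hy. unfold Rdiv. apply Rmult_le_compat; try lra.
  left; apply Rinv_0_lt_compat; lra. apply Rinv_le_contravar; lra.
Qed.

Lemma Cmod_neq0 z m : 0 < m -> m <= Cmod z -> z <> 0%C.
Proof. intros Hm H E. rewrite E, Cmod_0 in H. lra. Qed.

Section Factor.
Variables (w : C -> C) (s0 : C) (r L A1 m : R).
Hypothesis Hr : 0 < r.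
Hypothesis HL : 0 <= L.
Hypothesis HA1 : A1 <= 1.
Hypothesis Hm : 0 < m.
Hypothesis Hw : forall h, Cmod h <= r -> w (s0 + h)%C = (w s0 * cexp (- h * RtoC L))%C.
Hypothesis HwA : forall h, Cmod h <= r -> Cmod (w (s0 + h)%C) <= A1.
Hypothesis Hw0 : Cmod (w s0) * exp (L * r) <= A1.
Hypothesis Hmw : forall h, Cmod h <= r -> m <= Cmod (1 - w (s0 + h)%C)%C.

Let f s := (/ (1 - w s))%C.
Let d := ((- RtoC L * w s0) / ((1 - w s0) * (1 - w s0)))%C.

Lemma Hmw0 : m <= Cmod (1 - w s0)%C.
Proof. pose proof (Hmw 0%C). rewrite Cplus_0_r in H. apply H. rewrite Cmod_0; lra. Qed.

Lemma HA10 : 0 <= A1.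
Proof. pose proof (HwA 0%C). pose proof (Cmod_ge_0 (w (s0 + 0)%C)). rewrite Cmod_0 in H. specialize (H ltac:(lra)). lra. Qed.

Lemma cexp_hL h : Cmod h <= r ->
  Cmod (cexp (- h * RtoC L) - 1)%C <= 4 * L * Cmod h * exp (L * r) /\
  Cmod (cexp (- h * RtoC L) - 1 - (- h * RtoC L))%C <= 8 * L ^ 2 * Cmod h ^ 2 * exp (L * r).
Proof.
  intros Hh. destruct (cexp_bounds (- h * RtoC L)%C) as [B1 B2].
  assert (Hz : Cmod (- h * RtoC L)%C = L * Cmod h).
  { rewrite Cmod_mult, Cmod_opp, Cmod_R, Rabs_right by lra. ring. }
  rewrite Hz in B1, B2.
  assert (exp (L * Cmod h) <= exp (L * r)) by (apply exp_mono'; apply Rmult_le_compat_l; auto).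
  assert (0 <= Cmod h) by apply Cmod_ge_0.
  split.
  - eapply Rle_trans. apply B1. replace (4 * (L * Cmod h)) with (4 * L * Cmod h) by ring.
    apply Rmult_le_compat_l; auto. nra.
  - eapply Rle_trans. apply B2. replace (8 * (L * Cmod h) ^ 2) with (8 * L ^ 2 * Cmod h ^ 2) by ring.
    apply Rmult_le_compat_l; auto. nra.
Qed.

Lemma fb1 h : Cmod h <= r -> Cmod (f (s0 + h)%C - 1)%C <= A1 / m.
Proof.
  intros Hh. unfold f. assert (Hn := Cmod_neq0 _ _ Hm (Hmw h Hh)).
  replace (/ (1 - w (s0 + h)%C) - 1)%C with (w (s0 + h)%C / (1 - w (s0 + h)%C))%C by (field; auto).
  rewrite Cmod_div by auto. apply div_le. split; [apply Cmod_ge_0| apply HwA; auto]. split; auto.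
Qed.

Lemma fb_low h : Cmod h <= r -> 1 <= Cmod (f (s0 + h)%C) * (1 + A1).
Proof.
  intros Hh. unfold f. assert (Hn := Cmod_neq0 _ _ Hm (Hmw h Hh)).
  rewrite Cmod_inv by auto.
  pose proof (Cmod_triangle 1 (- w (s0 + h)%C))%C. rewrite Cmod_opp, Cmod_1 in H.
  pose proof (HwA h Hh). pose proof (Hmw h Hh).
  apply Rmult_le_reg_l with (Cmod (1 - w (s0 + h)%C)%C). lra.
  rewrite <- Rmult_assoc, Rinv_r by lra. change (1 - w (s0 + h)%C)%C with (1 + - w (s0 + h)%C)%C. lra.
Qed.

Lemma fb2 h : Cmod h <= r -> Cmod (f (s0 + h)%C - f s0)%C <= (4 * L * A1 / (m * m)) * Cmod h.
Proof.
  intros Hh. unfold f. assert (Hn := Cmod_neq0 _ _ Hm (Hmw h Hh)).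
  assert (Hn0 := Cmod_neq0 _ _ Hm Hmw0).
  replace (/ (1 - w (s0 + h)%C) - / (1 - w s0))%C with
    (w s0 * (cexp (- h * RtoC L) - 1) / ((1 - w (s0 + h)%C) * (1 - w s0)))%C
    by (rewrite (Hw h Hh); field; rewrite <- (Hw h Hh); auto).
  rewrite Cmod_div by (apply Cmult_neq_0; auto). rewrite !Cmod_mult.
  destruct (cexp_hL h Hh) as [B1 _].
  pose proof (Cmod_ge_0 h). pose proof (Cmod_ge_0 (w s0)).
  pose proof (Cmod_ge_0 (cexp (- h * RtoC L) - 1)%C).
  assert (Cmod (w s0) * Cmod (cexp (- h * RtoC L) - 1)%C <= 4 * L * A1 * Cmod h).
  { eapply Rle_trans. apply Rmult_le_compat_l; auto. apply B1.
    replace (Cmod (w s0) * (4 * L * Cmod h * exp (L * r))) with ((Cmod (w s0) * exp (L * r)) * (4 * L * Cmod h)) by ring.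
    replace (4 * L * A1 * Cmod h) with (A1 * (4 * L * Cmod h)) by ring.
    apply Rmult_le_compat_r; auto. nra. }
  replace (4 * L * A1 / (m * m) * Cmod h) with ((4 * L * A1 * Cmod h) / (m * m)) by (field; lra).
  apply div_le. split; auto. apply Rmult_le_pos; auto.
  split. nra. apply Rmult_le_compat; try lra. apply Hmw; auto. apply Hmw0.
Qed.

Lemma fb_d : Cmod d <= 4 * L * A1 / (m * m).
Proof.
  unfold d. assert (Hn0 := Cmod_neq0 _ _ Hm Hmw0).
  rewrite Cmod_div by (apply Cmult_neq_0; auto). rewrite !Cmod_mult, Cmod_opp, Cmod_R, Rabs_right by lra.
  pose proof (HwA 0%C). rewrite Cplus_0_r, Cmod_0 in H. specialize (H ltac:(lra)).
  pose proof (Cmod_ge_0 (w s0)).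
  apply div_le. split. nra. apply (Rmult_le_compat_l L) in H; [|exact HL]. nra.
  split. nra. apply Rmult_le_compat; try lra; apply Hmw0.
Qed.

Lemma fb3 h : Cmod h <= r -> Cmod (f (s0 + h)%C - f s0 - h * d)%C <= (20 * L ^ 2 * A1 / (m * (m * m))) * Cmod h ^ 2.
Proof.
  intros Hh. unfold f, d. assert (Hn := Cmod_neq0 _ _ Hm (Hmw h Hh)).
  assert (Hn0 := Cmod_neq0 _ _ Hm Hmw0).
  set (W := w (s0 + h)%C) in *. set (W0 := w s0) in *. set (E := cexp (- h * RtoC L)) in *.
  assert (HW : W = (W0 * E)%C) by (apply Hw; auto).
  replace (/ (1 - W) - / (1 - W0) - h * (- RtoC L * W0 / ((1 - W0) * (1 - W0))))%C with
    ((W0 * (E - 1 - (- h * RtoC L)) * (1 - W0) + h * (- RtoC L * W0) * (W0 * (E - 1))) / ((1 - W) * ((1 - W0) * (1 - W0))))%C.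
  2:{ field_simplify_eq; auto. rewrite HW. ring. }
  rewrite Cmod_div by (repeat apply Cmult_neq_0; auto).
  destruct (cexp_hL h Hh) as [B1 B2]. fold E in B1, B2.
  pose proof (Cmod_ge_0 h). pose proof (Cmod_ge_0 W0).
  assert (HW0 : Cmod W0 <= A1).
  { pose proof (HwA 0%C). rewrite Cplus_0_r, Cmod_0 in H1. apply H1; lra. }
  pose proof (exp_pos (L * r)).
  assert (N1 : Cmod (W0 * (E - 1 - (- h * RtoC L)) * (1 - W0))%C <= 8 * L ^ 2 * A1 * Cmod h ^ 2 * 2).
  { rewrite !Cmod_mult.
    assert (Cmod (1 - W0)%C <= 2).
    { pose proof (Cmod_triangle 1 (- W0))%C. rewrite Cmod_opp, Cmod_1 in H2.
      change (1 - W0)%C with (1 + - W0)%C. lra. }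
    apply Rmult_le_compat; try apply Rmult_le_pos; try apply Cmod_ge_0; auto.
    eapply Rle_trans. apply Rmult_le_compat_l; auto. apply B2.
    replace (Cmod W0 * (8 * L ^ 2 * Cmod h ^ 2 * exp (L * r))) with ((Cmod W0 * exp (L * r)) * (8 * L ^ 2 * Cmod h ^ 2)) by ring.
    replace (8 * L ^ 2 * A1 * Cmod h ^ 2) with (A1 * (8 * L ^ 2 * Cmod h ^ 2)) by ring.
    apply Rmult_le_compat_r; auto. nra. }
  assert (N2 : Cmod (h * (- RtoC L * W0) * (W0 * (E - 1)))%C <= 4 * L ^ 2 * A1 * Cmod h ^ 2).
  { rewrite !Cmod_mult, Cmod_opp, Cmod_R, Rabs_right by lra.
    pose proof (Cmod_ge_0 (E - 1)%C).
    assert (Cmod W0 * Cmod (E - 1)%C <= 4 * L * A1 * Cmod h).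
    { eapply Rle_trans. apply Rmult_le_compat_l; auto. apply B1.
      replace (Cmod W0 * (4 * L * Cmod h * exp (L * r))) with ((Cmod W0 * exp (L * r)) * (4 * L * Cmod h)) by ring.
      replace (4 * L * A1 * Cmod h) with (A1 * (4 * L * Cmod h)) by ring.
      apply Rmult_le_compat_r; auto. nra. }
    assert (Cmod h * (L * Cmod W0) <= Cmod h * L * 1) .
    { pose proof HA10. rewrite <- Rmult_assoc. apply Rmult_le_compat_l. nra. lra. }
    assert (0 <= Cmod h * (L * Cmod W0)) by (apply Rmult_le_pos; nra).
    assert (Cmod h * (L * Cmod W0) * (Cmod W0 * Cmod (E - 1)%C) <= (Cmod h * L) * (4 * L * A1 * Cmod h)).
    { apply Rmult_le_compat; try nra. }
    nra. }
  assert (Hnum : Cmod (W0 * (E - 1 - (- h * RtoC L)) * (1 - W0) + h * (- RtoC L * W0) * (W0 * (E - 1)))%C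
     <= 20 * L ^ 2 * A1 * Cmod h ^ 2).
  { eapply Rle_trans. apply Cmod_triangle. lra. }
  replace (20 * L ^ 2 * A1 / (m * (m * m)) * Cmod h ^ 2) with ((20 * L ^ 2 * A1 * Cmod h ^ 2) / (m * (m * m))) by (field; lra).
  apply div_le. split; auto. apply Cmod_ge_0.
  rewrite !Cmod_mult. split. apply Rmult_lt_0_compat; [lra| apply Rmult_lt_0_compat; lra].
  apply Rmult_le_compat; [lra | nra | exact (Hmw h Hh) | apply Rmult_le_compat; try lra; apply Hmw0].
Qed.
End Factor.

Lemma pseries_step p x : 1 < p -> 1 <= x ->
  (p - 1) * exp (- p * ln (x + 1)) <= exp ((1 - p) * ln x) - exp ((1 - p) * ln (x + 1)).
Proof.
  intros Hp Hx.
  set (g := fun y => exp ((1 - p) * ln y)).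
  destruct (MVT_gen g x (x + 1) (fun y => (1 - p) / y * exp ((1 - p) * ln y))) as [c [Hc Heq]].
  - intros y Hy. rewrite Rmin_left, Rmax_right in Hy by lra. unfold g. auto_derive. lra. field. lra.
  - intros y Hy. rewrite Rmin_left, Rmax_right in Hy by lra.
    apply continuity_pt_filterlim. apply (ex_derive_continuous g y).
    unfold g. auto_derive. lra.
  - rewrite Rmin_left, Rmax_right in Hc by lra. unfold g in Heq.
    replace (x + 1 - x) with 1 in Heq by ring.
    assert (Hc0 : 0 < c) by lra.
    assert (E1 : (1 - p) / c * exp ((1 - p) * ln c) = (1 - p) * exp (- p * ln c)).
    { replace ((1 - p) * ln c) with (- p * ln c + ln c) by ring. rewrite exp_plus, exp_ln by lra. field. lra. }
    assert (E2 : exp (- p * ln (x + 1)) <= exp (- p * ln c)).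
    { apply exp_mono'. assert (ln c <= ln (x + 1)) by (apply ln_le; lra). nra. }
    rewrite E1 in Heq. nra.
Qed.

Lemma pseries_summ p : 1 < p -> summ (fun n => exp (- p * ln (INR n + 1))).
Proof.
  intros Hp. split. intros; left; apply exp_pos.
  exists (1 + 1 / (p - 1)).
  assert (H : forall N, psum (fun n => exp (- p * ln (INR n + 1))) (S N) + exp ((1 - p) * ln (INR N + 1)) / (p - 1) <= 1 + 1 / (p - 1)).
  { induction N.
    - simpl. replace (0 + 1) with 1 by ring. rewrite ln_1, !Rmult_0_r, exp_0. lra.
    - change (psum (fun n => exp (- p * ln (INR n + 1))) (S N) + exp (- p * ln (INR (S N) + 1)) +
         exp ((1 - p) * ln (INR (S N) + 1)) / (p - 1) <= 1 + 1 / (p - 1)).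
      rewrite S_INR.
      pose proof (pseries_step p (INR N + 1) Hp ltac:(pose proof (pos_INR N); lra)).
      assert (exp (- p * ln (INR N + 1 + 1)) <= (exp ((1 - p) * ln (INR N + 1)) - exp ((1 - p) * ln (INR N + 1 + 1))) / (p - 1)).
      { apply Rmult_le_reg_l with (p - 1). lra. unfold Rdiv. rewrite <- Rmult_assoc.
        replace ((p - 1) * (exp ((1 - p) * ln (INR N + 1)) - exp ((1 - p) * ln (INR N + 1 + 1))) * / (p - 1))
          with (exp ((1 - p) * ln (INR N + 1)) - exp ((1 - p) * ln (INR N + 1 + 1))) by (field; lra). lra. }
      unfold Rdiv in *. lra. }
  intros N. destruct N. simpl. assert (0 < 1 / (p - 1)) by (apply Rdiv_lt_0_compat; lra). lra.
  specialize (H N). assert (0 <= exp ((1 - p) * ln (INR N + 1)) / (p - 1)).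
  { apply Rdiv_le_0_compat. left; apply exp_pos. lra. }
  lra.
Qed.

Lemma sum_f_psum u N : sum_f_R0 u N = psum u (S N).
Proof. induction N; simpl. lra. simpl in IHN. rewrite IHN. ring. Qed.

Lemma Series_zero : Series (fun _ => 0) = 0.
Proof.
  pose proof (Series_scal_l 0 (fun _ => 0)) as H. simpl in H.
  replace (fun _ : nat => 0 * 0) with (fun _ : nat => 0) in H. rewrite H; ring.
  apply functional_extensionality; intros; ring.
Qed.

Lemma psum_le_Series u : (forall n, 0 <= u n) -> ex_series u -> forall N, psum u N <= Series u.
Proof.
  intros Hu He N. destruct N as [|N].
  - simpl. replace 0 with (Series (fun _ => 0)) by (apply Series_zero).
    apply Series_le; auto. intros; split; auto; lra.
  - rewrite (Series_incr_n u (S N)) by (auto; lia). simpl pred. rewrite sum_f_psum.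
    assert (0 <= Series (fun k => u (S N + k)%nat)).
    { replace 0 with (Series (fun _ => 0)) by (apply Series_zero).
      apply Series_le. intros; split; auto; lra. apply (ex_series_incr_n u (S N)); auto. }
    lra.
Qed.

Section Summ.
Variables (lambda : R) (l : nat -> R) (a : nat -> nat).
Hypothesis Hlambda : 0 < lambda.
Hypothesis Hl : forall n, -1 <= l n <= 1.
Hypothesis Ha0 : (0 < a O)%nat.
Hypothesis Hainc : forall n, (a n < a (S n))%nat.

Lemma a_ge n : (S n <= a n)%nat.
Proof. induction n. lia. specialize (Hainc n). lia. Qed.

Lemma a_mono m n : (m <= n)%nat -> (a m <= a n)%nat.
Proof. intros H; induction H. lia. specialize (Hainc m0). lia. Qed.

Lemma a_pos n : 1 <= INR (a n).
Proof. pose proof (a_ge n). apply (le_INR 1). lia. Qed.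

Lemma count Cst delta : 0 < Cst -> 0 < delta ->
  (forall t, 0 < t < delta ->
       ex_series (fun n => exp (- (l n * INR (a n) * t))) /\
       Series (fun n => exp (- (l n * INR (a n) * t))) <= Cst * Rpower t (- lambda)) ->
  forall n, / delta < INR (a n) -> INR (S n) * exp (-1) <= Cst * exp (lambda * ln (INR (a n))).
Proof.
  intros HC Hd H n Hn.
  pose proof (a_pos n) as Han.
  set (t := / INR (a n)).
  assert (Ht : 0 < t < delta).
  { split. unfold t. apply Rinv_0_lt_compat; lra.
    unfold t. rewrite <- (Rinv_inv delta). apply Rinv_lt_contravar. apply Rmult_lt_0_compat.
    apply Rinv_0_lt_compat; lra. lra. auto. }
  destruct (H t Ht) as [Hex Hle].
  set (u := fun n => exp (- (l n * INR (a n) * t))) in *.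
  assert (Hu : forall k, 0 <= u k) by (intros; left; apply exp_pos).
  assert (HR : Rpower t (- lambda) = exp (lambda * ln (INR (a n)))).
  { unfold Rpower, t. rewrite ln_Rinv by lra. f_equal; ring. }
  rewrite HR in Hle.
  assert (Hk : forall k, (k <= n)%nat -> exp (-1) <= u k).
  { intros k Hkn. unfold u. apply exp_mono'.
    pose proof (a_mono k n Hkn). apply le_INR in H0. pose proof (a_pos k).
    assert (INR (a k) * t <= 1).
    { unfold t. apply Rmult_le_reg_r with (INR (a n)). lra. rewrite Rmult_assoc, Rinv_l by lra. lra. }
    assert (0 <= INR (a k) * t) by (apply Rmult_le_pos; lra).
    specialize (Hl k). rewrite Rmult_assoc. nra. }
  assert (Hp : forall k, (k <= S n)%nat -> INR k * exp (-1) <= psum u k).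
  { induction k; intros Hkn. simpl. lra.
    simpl psum. rewrite S_INR. specialize (IHk ltac:(lia)). specialize (Hk k ltac:(lia)). lra. }
  pose proof (Hp (S n) (le_n _)). pose proof (psum_le_Series u Hu Hex (S n)). lra.
Qed.

Lemma summ_T Cst delta sigma1 : 0 < Cst -> 0 < delta ->
  (forall t, 0 < t < delta ->
       ex_series (fun n => exp (- (l n * INR (a n) * t))) /\
       Series (fun n => exp (- (l n * INR (a n) * t))) <= Cst * Rpower t (- lambda)) ->
  lambda < sigma1 ->
  summ (fun n => (1 + ln (INR (a n))) ^ 2 * exp (- ln (INR (a n)) * sigma1)).
Proof.
  intros HC Hd H Hs.
  set (eps := Rmin ((sigma1 - lambda) / 2) 1).
  assert (He : 0 < eps <= 1).
  { unfold eps. split. apply Rmin_pos; lra. apply Rmin_r. }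
  assert (He2 : eps <= (sigma1 - lambda) / 2) by apply Rmin_l.
  set (kappa := eps / 2). set (sigma2 := sigma1 - eps). set (p := sigma2 / lambda).
  assert (Hp : 1 < p).
  { unfold p. apply Rmult_lt_reg_r with lambda; auto. unfold Rdiv. rewrite Rmult_assoc, Rinv_l by lra.
    unfold sigma2. lra. }
  set (c := 1 + ln Cst).
  set (K := exp (p * c) / kappa ^ 2).
  assert (Hk : 0 < kappa) by (unfold kappa; lra).
  destruct (archimed_cor1 delta Hd) as [N0 [HN0 HN0']].
  apply summ_dom with (u := fun n => K * exp (- p * ln (INR n + 1))) (N0 := N0).
  - apply summ_scal. unfold K. left; apply Rdiv_lt_0_compat. apply exp_pos. apply pow_lt; auto.
    apply pseries_summ; auto.
  - intros n. apply Rmult_le_pos. apply pow2_ge_0. left; apply exp_pos.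
  - intros n Hn.
    pose proof (a_pos n) as Han.
    set (L := ln (INR (a n))).
    assert (HL : 0 <= L). { unfold L. rewrite <- ln_1. apply ln_le; lra. }
    assert (Hlt : / delta < INR (a n)).
    { pose proof (a_ge n). apply le_INR in H0. rewrite S_INR in H0. apply le_INR in Hn.
      assert (0 < INR N0) by (apply lt_0_INR; lia).
      assert (/ delta < INR N0).
      { rewrite <- (Rinv_inv (INR N0)). apply Rinv_lt_contravar. apply Rmult_lt_0_compat; auto.
        apply Rinv_0_lt_compat; auto. auto. }
      lra. }
    pose proof (count Cst delta HC Hd H n Hlt) as Hc.
    assert (HlnL : ln (INR n + 1) - 1 <= ln Cst + lambda * L).
    { rewrite S_INR in Hc. assert (0 < INR n + 1) by (pose proof (pos_INR n); lra).
      apply ln_le in Hc; [| apply Rmult_lt_0_compat; [lra| apply exp_pos]].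
      rewrite ln_mult, ln_exp, ln_mult, ln_exp in Hc by (try lra; apply exp_pos).
      unfold L; lra. }
    assert (H1 : (1 + L) <= exp (kappa * L) / kappa).
    { pose proof (exp_ineq1_le (kappa * L)). apply Rmult_le_reg_r with kappa; auto.
      unfold Rdiv. rewrite Rmult_assoc, Rinv_l by lra. unfold kappa in *. nra. }
    assert (H2 : (1 + L) ^ 2 <= exp (eps * L) / kappa ^ 2).
    { replace (exp (eps * L) / kappa ^ 2) with ((exp (kappa * L) / kappa) ^ 2).
      2:{ replace (eps * L) with (kappa * L + kappa * L) by (unfold kappa; field). rewrite exp_plus. field. lra. }
      apply pow_incr. lra. }
    assert (H3 : (1 + L) ^ 2 * exp (- L * sigma1) <= exp (- sigma2 * L) / kappa ^ 2).
    { eapply Rle_trans. apply Rmult_le_compat_r. left; apply exp_pos. apply H2.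
      unfold Rdiv. rewrite Rmult_comm, <- Rmult_assoc, <- exp_plus.
      replace (- L * sigma1 + eps * L) with (- sigma2 * L) by (unfold sigma2; ring). right; ring. }
    eapply Rle_trans. apply H3.
    unfold K. unfold Rdiv. rewrite (Rmult_comm (exp (p * c))), Rmult_assoc, <- exp_plus.
    rewrite Rmult_comm. apply Rmult_le_compat_l. left; apply Rinv_0_lt_compat, pow_lt; auto.
    apply exp_mono'.
    assert (Hsig : sigma2 = p * lambda) by (unfold p; field; lra).
    rewrite Hsig. unfold c.
    assert (0 < p) by lra. nra.
Qed.
End Summ.

Definition wf (l : R) (a : nat) (s : C) : C := (RtoC l * cpow_neg (INR a) s)%C.

Lemma Re_mulR (z : C) (L : R) : Re (- z * RtoC L)%C = - Re z * L.
Proof. destruct z as [x y]. simpl. unfold Re. simpl. ring. Qed.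

Lemma Cmod_wf l a s : Cmod (wf l a s) = Rabs l * exp (- Re s * ln (INR a)).
Proof.
  unfold wf, cpow_neg. rewrite Cmod_mult, Cmod_R, Cmod_cexp, Re_mulR. reflexivity.
Qed.

Lemma wf_shift l a s0 h : wf l a (s0 + h)%C = (wf l a s0 * cexp (- h * RtoC (ln (INR a))))%C.
Proof.
  unfold wf, cpow_neg. rewrite <- Cmult_assoc, <- cexp_add. f_equal. f_equal. ring.
Qed.

Lemma Re_shift (s0 h : C) r : Cmod h <= r -> Re s0 - r <= Re (s0 + h)%C.
Proof.
  intros H. pose proof (re_le_Cmod h). pose proof (Rle_abs (- Re h)). rewrite Rabs_Ropp in H1.
  replace (Re (s0 + h)%C) with (Re s0 + Re h) by (destruct s0, h; reflexivity). lra.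
Qed.

Lemma m_exists (l : nat -> R) (a : nat -> nat) sigma1 :
  (forall n, -1 <= l n <= 1) -> (0 < a O)%nat -> (forall n, (a n < a (S n))%nat) ->
  ~ (a O = 1%nat /\ l O = 1) -> 0 < sigma1 ->
  exists m, 0 < m /\ forall n s, sigma1 <= Re s -> m <= Cmod (1 - wf (l n) (a n) s)%C.
Proof.
  intros Hl Ha0 Hainc Hnd Hs.
  set (q := 1 - exp (- ln 2 * sigma1)).
  assert (Hln2 : 0 < ln 2) by (rewrite <- ln_1; apply ln_increasing; lra).
  assert (Hq : 0 < q).
  { unfold q. assert (exp (- ln 2 * sigma1) < exp 0) by (apply exp_increasing; nra). rewrite exp_0 in H. lra. }
  assert (Hgen : forall n s, (2 <= a n)%nat -> sigma1 <= Re s -> q <= Cmod (1 - wf (l n) (a n) s)%C).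
  { intros n s Han Hre.
    pose proof (Cmod_triangle (1 - wf (l n) (a n) s) (wf (l n) (a n) s))%C.
    assert (E : (1 - wf (l n) (a n) s + wf (l n) (a n) s = 1)%C) by ring. rewrite E, Cmod_1 in H.
    assert (Cmod (wf (l n) (a n) s) <= exp (- ln 2 * sigma1)).
    { rewrite Cmod_wf. apply le_INR in Han. simpl in Han.
      assert (ln 2 <= ln (INR (a n))) by (apply ln_le; lra).
      assert (Rabs (l n) <= 1) by (apply Rabs_le; apply Hl).
      pose proof (Rabs_pos (l n)).
      assert (exp (- Re s * ln (INR (a n))) <= exp (- ln 2 * sigma1)) by (apply exp_mono'; nra).
      pose proof (exp_pos (- Re s * ln (INR (a n)))). nra. }
    unfold q. lra. }
  destruct (Nat.eq_dec (a O) 1) as [Ha1|Ha1].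
  - assert (Hl0 : l O < 1) by (destruct (Hl O); destruct (Req_dec (l O) 1); [exfalso; tauto| lra]).
    exists (Rmin q (1 - l O)). split. apply Rmin_pos; lra.
    intros n s Hre. destruct n as [|n].
    + rewrite Ha1. unfold wf, cpow_neg. simpl INR. rewrite ln_1.
      assert (E1 : (- s * RtoC 0%R = 0)%C) by (apply injective_projections; simpl; ring).
      rewrite E1, cexp_0, Cmult_1_r.
      assert (E2 : (1 - RtoC (l O) = RtoC (1 - l O)%R)%C) by (apply injective_projections; simpl; ring).
      rewrite E2.
      rewrite Cmod_R, Rabs_right by lra. apply Rmin_r.
    + eapply Rle_trans. apply Rmin_l. apply Hgen; auto.
      assert (forall k, (S k <= a k)%nat) by (induction k; [lia| specialize (Hainc k); lia]).
      pose proof (H (S n)). lia.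
  - exists q. split; auto. intros n s Hre. apply Hgen; auto.
    assert (forall k, (a O + k <= a k)%nat) by (induction k; [lia| specialize (Hainc k); lia]).
    specialize (H n). lia.
Qed.

Theorem mainTheorem3
  (lambda : R) (l : nat -> R) (a : nat -> nat)
  (Hlambda : 0 < lambda)
  (Hl : forall n, -1 <= l n <= 1)
  (Ha0 : (0 < a O)%nat)
  (Hainc : forall n, (a n < a (S n))%nat)
  (Hnondeg : ~ (a O = 1%nat /\ l O = 1))
  (Hmaj : exists Cst, 0 < Cst /\ exists delta, 0 < delta /\
     forall t, 0 < t < delta ->
       ex_series (fun n => exp (- (l n * INR (a n) * t))) /\
       Series (fun n => exp (- (l n * INR (a n) * t))) <= Cst * Rpower t (- lambda)) :
  exists F : C -> C,
    holomorphic_on (fun s => Rmax (1/2) lambda < Re s) F /\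
    (forall s, Rmax (1/2) lambda < Re s -> F s <> 0%C) /\
    (forall s, Rmax (1/2) lambda < Re s -> 1 < Re s ->
       filterlim (fun N => cprod (fun n => euler_factor (l n) (a n) s) N)
                 eventually (locally (F s))).
Proof.
  destruct Hmaj as [Cst [HC [delta [Hd Hmaj']]]].
  set (F := fun s : C => epsilon (inhabits (RtoC 0))
     (fun v : C => tends (fun N => cprod (fun n => euler_factor (l n) (a n) s) N) v)).
  assert (Key : forall s0, Rmax (1/2) lambda < Re s0 ->
    ex_derive (K := C_AbsRing) (V := C_NormedModule) F s0 /\ F s0 <> 0%C /\
    tends (fun N => cprod (fun n => euler_factor (l n) (a n) s0) N) (F s0)).
  { intros s0 Hs0.
    pose proof (Rmax_r (1/2) lambda) as Hmx.
    set (r := (Re s0 - lambda) / 2).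
    set (sigma1 := Re s0 - r).
    assert (Hr : 0 < r) by (unfold r; lra).
    assert (Hsig : lambda < sigma1) by (unfold sigma1, r; lra).
    destruct (m_exists l a sigma1 Hl Ha0 Hainc Hnondeg ltac:(lra)) as [m [Hm Hmw]].
    set (L := fun n => ln (INR (a n))).
    set (A1 := fun n => exp (- L n * sigma1)).
    assert (HL : forall n, 0 <= L n).
    { intros n. unfold L. rewrite <- ln_1. apply ln_le. lra. apply a_pos; auto. }
    assert (HA1 : forall n, A1 n <= 1).
    { intros n. unfold A1. rewrite <- exp_0. apply exp_mono'. specialize (HL n). nra. }
    assert (HA0 : forall n, 0 <= A1 n) by (intros; left; apply exp_pos).
    assert (Hw : forall n h, Cmod h <= r -> wf (l n) (a n) (s0 + h)%C = (wf (l n) (a n) s0 * cexp (- h * RtoC (L n)))%C)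
      by (intros; apply wf_shift).
    assert (HwA : forall n h, Cmod h <= r -> Cmod (wf (l n) (a n) (s0 + h)%C) <= A1 n).
    { intros n h Hh. rewrite Cmod_wf. pose proof (Re_shift s0 h r Hh).
      assert (Rabs (l n) <= 1) by (apply Rabs_le; apply Hl). pose proof (Rabs_pos (l n)).
      assert (exp (- Re (s0 + h)%C * ln (INR (a n))) <= A1 n).
      { unfold A1, L. apply exp_mono'. specialize (HL n). unfold L in HL. unfold sigma1 in *. nra. }
      pose proof (exp_pos (- Re (s0 + h)%C * ln (INR (a n)))). nra. }
    assert (Hw0 : forall n, Cmod (wf (l n) (a n) s0) * exp (L n * r) <= A1 n).
    { intros n. rewrite Cmod_wf. rewrite Rmult_assoc, <- exp_plus.
      assert (Rabs (l n) <= 1) by (apply Rabs_le; apply Hl). pose proof (Rabs_pos (l n)).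
      unfold A1. replace (- Re s0 * ln (INR (a n)) + L n * r) with (- L n * sigma1) by (unfold L, sigma1; ring).
      pose proof (exp_pos (- L n * sigma1)). nra. }
    assert (Hmw' : forall n h, Cmod h <= r -> m <= Cmod (1 - wf (l n) (a n) (s0 + h)%C)%C).
    { intros n h Hh. apply Hmw. pose proof (Re_shift s0 h r Hh). unfold sigma1. lra. }
    pose proof (summ_T lambda l a Hlambda Hl Ha0 Hainc Cst delta sigma1 HC Hd Hmaj' Hsig) as HT.
    set (T := fun n => (1 + ln (INR (a n))) ^ 2 * exp (- ln (INR (a n)) * sigma1)) in HT.
    assert (HTA : forall n, A1 n <= T n /\ L n * A1 n <= T n /\ L n ^ 2 * A1 n <= T n).
    { intros n. unfold T. fold (L n). fold (A1 n). specialize (HL n). specialize (HA0 n).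
      repeat split; nra. }
    assert (Sb : summ (fun n => A1 n / m)).
    { apply summ_dom with (u := fun n => / m * T n) (N0 := O).
      apply summ_scal; auto. left; apply Rinv_0_lt_compat; auto.
      intros; apply Rdiv_le_0_compat; auto.
      intros n _. unfold Rdiv. rewrite Rmult_comm. apply Rmult_le_compat_l. left; apply Rinv_0_lt_compat; auto.
      apply HTA. }
    assert (Sbe : summ (fun n => 4 * L n * A1 n / (m * m))).
    { apply summ_dom with (u := fun n => 4 / (m * m) * T n) (N0 := O).
      apply summ_scal; auto. left; apply Rdiv_lt_0_compat; nra.
      intros; apply Rdiv_le_0_compat. specialize (HL n); specialize (HA0 n); nra. nra.
      intros n _. replace (4 * L n * A1 n / (m * m)) with (4 / (m * m) * (L n * A1 n)) by (field; lra).
      apply Rmult_le_compat_l. left; apply Rdiv_lt_0_compat; nra. apply HTA. }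
    assert (Sga : summ (fun n => 20 * L n ^ 2 * A1 n / (m * (m * m)))).
    { assert (Hm3 : 0 < m * (m * m)) by (apply Rmult_lt_0_compat; [lra| apply Rmult_lt_0_compat; lra]).
      apply summ_dom with (u := fun n => 20 / (m * (m * m)) * T n) (N0 := O).
      apply summ_scal; auto. left; apply Rdiv_lt_0_compat; lra.
      intros; apply Rdiv_le_0_compat; auto. specialize (HA0 n). pose proof (pow2_ge_0 (L n)). nra.
      intros n _. replace (20 * L n ^ 2 * A1 n / (m * (m * m))) with (20 / (m * (m * m)) * (L n ^ 2 * A1 n)) by (field; lra).
      apply Rmult_le_compat_l. left; apply Rdiv_lt_0_compat; lra. apply HTA. }
    assert (Hconv : forall h, Cmod h <= r ->
      tends (fun N => cprod (fun n => euler_factor (l n) (a n) (s0 + h)%C) N) (F (s0 + h)%C)).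
    { intros h Hh. destruct (prod_tends (fun n => euler_factor (l n) (a n) (s0 + h)%C) (fun n => A1 n / m) Sb)
        as [v Hv].
      { intros n. exact (fb1 (wf (l n) (a n)) s0 r (A1 n) m Hm (HwA n) (Hmw' n) h Hh). }
      unfold F. apply epsilon_spec. exists v; exact Hv. }
    assert (Hconv0 := Hconv 0%C ltac:(rewrite Cmod_0; lra)). rewrite Cplus_0_r in Hconv0.
    split; [|split].
    - apply (prod_deriv (fun n s => euler_factor (l n) (a n) s) s0 r
        (fun n => ((- RtoC (L n) * wf (l n) (a n) s0) / ((1 - wf (l n) (a n) s0) * (1 - wf (l n) (a n) s0)))%C)
        (fun n => A1 n / m) (fun n => 4 * L n * A1 n / (m * m)) (fun n => 20 * L n ^ 2 * A1 n / (m * (m * m)))).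
      + apply Sb. + apply Sbe. + apply Sga.
      + intros n h Hh. exact (fb1 (wf (l n) (a n)) s0 r (A1 n) m Hm (HwA n) (Hmw' n) h Hh).
      + intros n h Hh. exact (fb2 (wf (l n) (a n)) s0 r (L n) (A1 n) m Hr (HL n) Hm (Hw n) (Hw0 n) (Hmw' n) h Hh).
      + intros n h Hh. exact (fb3 (wf (l n) (a n)) s0 r (L n) (A1 n) m Hr (HL n) (HA1 n) Hm (Hw n) (HwA n) (Hw0 n) (Hmw' n) h Hh).
      + intros n. exact (fb_d (wf (l n) (a n)) s0 r (L n) (A1 n) m Hr (HL n) Hm (HwA n) (Hmw' n)).
      + exact Hr.
      + exact Sb. + exact Sbe. + exact Sga.
      + exact Hconv.
    - assert (SA : summ A1).
      { apply summ_dom with (u := T) (N0 := O); auto. intros n _. apply HTA. }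
      destruct SA as [_ [Mc HMc]].
      assert (Hlow : forall N, exp (- Mc) <= Cmod (cprod (fun n => euler_factor (l n) (a n) s0) N)).
      { intros N. eapply Rle_trans; [| apply (cprod_lower _ A1 HA0)].
        apply exp_mono'. specialize (HMc N). lra.
        intros n. pose proof (fb_low (wf (l n) (a n)) s0 r (A1 n) m Hm (HwA n) (Hmw' n) 0%C ltac:(rewrite Cmod_0; lra)) as H.
        rewrite Cplus_0_r in H. exact H. }
      pose proof (tends_ge _ _ _ Hconv0 Hlow) as Hge. intros E. rewrite E, Cmod_0 in Hge.
      pose proof (exp_pos (- Mc)). lra.
    - exact Hconv0. }
  exists F. split; [|split].
  - intros s Hs. apply Key; auto.
  - intros s Hs. apply Key; auto.
  - intros s Hs _. apply tends_filterlim. apply Key; auto.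
Qed.
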